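(* Let $K(\mathbf x)$ and $M(\mathbf x)$ be real symmetric positive definite $n\times n$ matrices depending on a parameter $\mathbf x\in\mathbb R^\ell$ in a $\mathcal C^2$ way. Fix $\mathbf x^{(0)}\in\mathbb R^\ell$ and let $U_m(\mathbf x^{(0)})\in\mathbb R^{n\times m}$ be the $M(\mathbf x^{(0)})$-orthogonal basis produced by the Lanczos process at $\mathbf x^{(0)}$, so that $U_m(\mathbf x^{(0)})^T M(\mathbf x^{(0)}) U_m(\mathbf x^{(0)}) = I_m$. Let $F(\mathbf x) = U_m(\mathbf x)^T M(\mathbf x) K(\mathbf x)^{-1} M(\mathbf x) U_m(\mathbf x)$ be the Lanczos projection at $\mathbf x$, so in particular $F(\mathbf x^{(0)}) = U_m(\mathbf x^{(0)})^T M(\mathbf x^{(0)}) K(\mathbf x^{(0)})^{-1} M(\mathbf x^{(0)}) U_m(\mathbf x^{(0)})$. Then there exist a neighborhood $\mathcal N$ of $\mathbf x^{(0)}$ and a matrix-valued function $U_{m,0}:\mathcal N\to\mathbb R^{n\times m}$ such that: 1. for every $\mathbf x\in\mathcal N$, the columns of $U_{m,0}(\mathbf x)$ form an $M(\mathbf x)$-orthogonal basis of the column span of $U_m(\mathbf x^{(0)})$, i.e. $U_{m,0}(\mathbf x)^T M(\mathbf x) U_{m,0}(\mathbf x) = I_m$ and $\operatorname{span} U_{m,0}(\mathbf x) = \operatorname{span} U_m(\mathbf x^{(0)})$; 2. the function $F_0(\mathbf x) := U_{m,0}(\mathbf x)^T M(\mathbf x) K(\mathbf x)^{-1} M(\mathbf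 x) U_{m,0}(\mathbf x)$ is of class $\mathcal C^2(\mathcal N)$ and $F_0(\mathbf x^{(0)}) = F(\mathbf x^{(0)})$.
   Context: The setting is a parametric finite element model: $K(\mathbf x)$ (stiffness) and $M(\mathbf x)$ (mass) are the constraint-projected matrices, and the smallest eigenvalues of the pencil $K(\mathbf x)-\lambda M(\mathbf x)$ are approximated by running an inverse Lanczos process (with a fixed starting vector) on $M(\mathbf x)^{1/2}K(\mathbf x)^{-1}M(\mathbf x)^{1/2}$, implemented with the $M(\mathbf x)$-inner product; $U_m(\mathbf x)$ denotes the resulting $n\times m$ $M(\mathbf x)$-orthogonal Krylov basis. A matrix $U$ is $M$-orthogonal if $U^TMU=I$. *)

(* Defs.v *)
From mathcomp Require Import all_boot all_algebra all_classical all_reals all_analysis.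
Import GRing.Theory Num.Theory numFieldNormedType.Exports.
Set Implicit Arguments. Unset Strict Implicit. Unset Printing Implicit Defensive.
Local Open Scope classical_set_scope.
Local Open Scope ring_scope.

Definition ebasis (R : realType) (l : nat) (k : 'I_l) : 'rV[R]_l := delta_mx 0 k.

Definition partial (R : realType) (l : nat) (f : 'rV[R]_l -> R) (k : 'I_l)
  : 'rV[R]_l -> R := fun x => 'D_(ebasis R k) f x.

Definition cont_at (R : realType) (l : nat) (f : 'rV[R]_l -> R) (x : 'rV[R]_l) :=
  {for x, continuous f}.

Definition C2_on (R : realType) (l : nat) (N : set 'rV[R]_l) (f : 'rV[R]_l -> R) :=
  open N /\
  (forall x, N x -> cont_at f x) /\
  (forall k x, N x -> derivable f x (ebasis R k)) /\
  (forall k x, N x -> cont_at (partial f k) x) /\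
  (forall k j x, N x -> derivable (partial f k) x (ebasis R j)) /\
  (forall k j x, N x -> cont_at (partial (partial f k) j) x).

Definition mxC2_on (R : realType) (l p q : nat) (N : set 'rV[R]_l)
  (F : 'rV[R]_l -> 'M[R]_(p, q)) :=
  forall (a : 'I_p) (b : 'I_q), C2_on N (fun x => F x a b).

Definition sym_mx (R : realType) (n : nat) (A : 'M[R]_n) := A^T = A.

Definition posdef_mx (R : realType) (n : nat) (A : 'M[R]_n) :=
  forall v : 'cV[R]_n, v != 0 -> 0 < (v^T *m A *m v) 0 0.

Definition spd_mx (R : realType) (n : nat) (A : 'M[R]_n) := sym_mx A /\ posdef_mx A.

Definition M_orthonormal (R : realType) (n m : nat) (M : 'M[R]_n) (U : 'M[R]_(n, m)) :=
  U^T *m M *m U = 1%:M.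

Definition krylov_mx (R : realType) (n m : nat) (A : 'M[R]_n) (b : 'cV[R]_n)
  : 'M[R]_(n, m) := \matrix_(i < n, j < m) (iter j (mulmx A) b) i 0.

Definition upper_pos_diag (R : realType) (m : nat) (T : 'M[R]_m) :=
  (forall i j : 'I_m, (j < i)%N -> T i j = 0) /\ (forall i : 'I_m, 0 < T i i).

(* U is the m-step (exact arithmetic, no breakdown) Lanczos basis for the pencil
   K - lambda M obtained by the inverse Lanczos process on M^{1/2} K^{-1} M^{1/2},
   run in the M-inner product with starting vector b.  In M-inner-product form
   this is the M-orthonormal basis obtained by Gram-Schmidt from the Krylov
   vectors b, (K^{-1} M) b, ..., (K^{-1} M)^{m-1} b, i.e. the unique
   M-orthonormal U with  Krylov = U T, T upper triangular with positive diagonal. *)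
Definition lanczos_basis (R : realType) (n m : nat) (K M : 'M[R]_n) (b : 'cV[R]_n)
  (U : 'M[R]_(n, m)) :=
  M_orthonormal M U /\
  exists T : 'M[R]_m, upper_pos_diag T /\ krylov_mx m (invmx K *m M) b = U *m T.

(* Main.v *)
Require Import Defs.
From mathcomp Require Import all_boot all_algebra all_classical all_reals all_analysis.
Import GRing.Theory Num.Theory numFieldNormedType.Exports.
Import order.Order.TTheory.
Local Open Scope ring_scope.
Section A.
Variables (R : realType) (l : nat).
Implicit Types f g : 'rV[R]_l -> R.

Lemma contD f g : continuous f -> continuous g -> continuous (fun x => f x + g x).
Proof. move=> cf cg x; exact: cvgD (cf x) (cg x). Qed.
Lemma contM f g : continuous f -> continuous g -> continuous (fun x => f x * g x).
Proof. move=> cf cg x; exact: cvgM (cf x) (cg x). Qed.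
Lemma contV f : (forall x, f x != 0) -> continuous f -> continuous (fun x => (f x)^-1).
Proof. move=> nz cf x; exact: cvgV (nz x) (cf x). Qed.
Lemma contS f : continuous f -> continuous (fun x => Num.sqrt (f x)).
Proof. move=> cf x; apply: (continuous_comp (cf x)); exact: sqrt_continuous. Qed.
Lemma contC (c : R) : continuous (fun _ : 'rV[R]_l => c).
Proof. exact: cst_continuous. Qed.

Lemma derive_line f x v : 'D_v f x = 'D_1 (fun h : R => f (h *: v + x)) 0.
Proof.
rewrite /derive.
have -> : (fun h : R => h^-1 *: ((f \o shift x) (h *: v) - f x)) = (fun h : R => h^-1 *: (((fun h0 : R => f (h0 *: v + x)) \o shift 0) (h *: 1) - (fun h0 => f (h0 *: v + x)) 0)).
  apply: funext => h /=.
  by rewrite scale0r add0r addr0 [h *: 1]mulr1 addrC.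
by [].
Qed.

Lemma derive_comp1 (g : R -> R) f x v : derivable g (f x) 1 -> derivable f x v ->
  derivable (fun y => g (f y)) x v /\
  'D_v (fun y => g (f y)) x = 'D_1 g (f x) * 'D_v f x.
Proof.
move=> dg df.
have dphi := (derivable1P _ _ _).1 df.
have dphi' := (derivable1_diffP _ _).1 dphi.
have dg' : differentiable g ((fun h : R => f (h *: v + x)) 0).
  by rewrite /= scale0r add0r; apply/derivable1_diffP.
split.
  apply/derivable1P/derivable1_diffP.
  exact: (differentiable_comp dphi' dg').
rewrite derive_line (derive_line f) -!derive1E.
have := derive1_comp dphi ((derivable1_diffP _ _).2 dg').
rewrite /comp => ->; rewrite /= scale0r add0r derive1E //.
Qed.

Fixpoint Ck (k : nat) f : Prop :=
  match k with
  | 0 => continuous f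
  | k'.+1 => continuous f /\ forall i : 'I_l,
      (forall x, derivable f x (ebasis R i)) /\ Ck k' (partial f i)
  end.

Lemma Ck_cont k f : Ck k f -> continuous f.
Proof. by case: k => [|k] //= []. Qed.

Lemma CkS k f : Ck k.+1 f -> Ck k f.
Proof.
elim: k f => [|k IH] f /= [cf H] //; split => // i.
by have [d h] := H i; split => //; apply: IH.
Qed.

Lemma CkSn k j f : Ck (j + k) f -> Ck k f.
Proof. by elim: j => [|j IH] //= /CkS /IH. Qed.

Lemma CkC k (c : R) : Ck k (fun _ => c).
Proof.
elim: k c => [|k IH] c /=; first exact: contC.
split; first exact: contC.
move=> i; split; first by move=> x; exact: derivable_cst.
have -> : partial (fun _ => c) i = (fun _ => 0).
  by apply: funext => y; rewrite /partial; exact: (derive_cst c).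
exact: IH.
Qed.

Lemma CkD k f g : Ck k f -> Ck k g -> Ck k (fun x => f x + g x).
Proof.
elim: k f g => [|k IH] f g /=; first exact: contD.
move=> [cf Hf] [cg Hg]; split; first exact: contD.
move=> i; have [df pf] := Hf i; have [dg pg] := Hg i; split.
  by move=> x; exact: (derivableD (df x) (dg x)).
have -> : partial (fun y => f y + g y) i = (fun y => partial f i y + partial g i y).
  by apply: funext => y; rewrite /partial; exact: (deriveD (df y) (dg y)).
exact: IH.
Qed.

Lemma CkM k f g : Ck k f -> Ck k g -> Ck k (fun x => f x * g x).
Proof.
elim: k f g => [|k IH] f g /=; first exact: contM.
move=> [cf Hf] [cg Hg]; split; first exact: contM.
move=> i; have [df pf] := Hf i; have [dg pg] := Hg i; split.
  by move=> x; exact: (derivableM (df x) (dg x)).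
have -> : partial (fun y => f y * g y) i =
    (fun y => f y * partial g i y + g y * partial f i y).
  by apply: funext => y; rewrite /partial; exact: (deriveM (df y) (dg y)).
by apply: CkD; apply: IH => //; apply: CkS; split.
Qed.

Lemma CkV k f : (forall x, f x != 0) -> Ck k f -> Ck k (fun x => (f x)^-1).
Proof.
move=> nz; elim: k f nz => [|k IH] f nz /=; first exact: contV.
move=> [cf Hf]; split; first exact: contV.
move=> i; have [df pf] := Hf i; split.
  by move=> x; exact: (derivableV (nz x) (df x)).
have -> : partial (fun y => (f y)^-1) i =
    (fun y => (-1) * ((f y)^-1 * (f y)^-1) * partial f i y).
  apply: funext => y; rewrite /partial (deriveV (nz y) (df y)).
  by rewrite mulN1r -invfM -expr2.
apply: CkM => //; apply: CkM; first exact: CkC.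
have cfk : Ck k f by apply: CkS; split.
by apply: CkM; apply: (IH f).
Qed.

Lemma CkSqrt k f : (forall x, 0 < f x) -> Ck k f -> Ck k (fun x => Num.sqrt (f x)).
Proof.
move=> pos; elim: k f pos => [|k IH] f pos /=; first exact: contS.
move=> [cf Hf]; split; first exact: contS.
have ds : forall x, derivable (@Num.sqrt R) (f x) 1.
  by move=> x; have [] := is_derive1_sqrt (pos x).
move=> i; have [df pf] := Hf i; split.
  by move=> x; exact: (proj1 (derive_comp1 _ _ _ _ (ds x) (df x))).
have -> : partial (fun y => Num.sqrt (f y)) i =
    (fun y => (2 * Num.sqrt (f y))^-1 * partial f i y).
  apply: funext => y; rewrite /partial (proj2 (derive_comp1 _ _ _ _ (ds y) (df y))).
  by rewrite derive_sqrt.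
apply: CkM => //; apply: CkV.
  by move=> x; rewrite mulf_neq0 // sqrtr_eq0 -ltNge pos.
apply: CkM; first exact: CkC.
by apply: (IH f) => //; apply: CkS; split.
Qed.

Lemma CkSum k (I : Type) (r : seq I) (P : pred I) (F : I -> 'rV[R]_l -> R) :
  (forall i, P i -> Ck k (F i)) -> Ck k (fun x => \sum_(i <- r | P i) F i x).
Proof.
move=> H; elim: r => [|a r IH].
  by under eq_fun => x do rewrite big_nil; exact: CkC.
under eq_fun => x do rewrite big_cons.
case Pa: (P a); last exact: IH.
by apply: CkD => //; apply: H.
Qed.

Lemma CkProd k (I : Type) (r : seq I) (P : pred I) (F : I -> 'rV[R]_l -> R) :
  (forall i, P i -> Ck k (F i)) -> Ck k (fun x => \prod_(i <- r | P i) F i x).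
Proof.
move=> H; elim: r => [|a r IH].
  by under eq_fun => x do rewrite big_nil; exact: CkC.
under eq_fun => x do rewrite big_cons.
case Pa: (P a); last exact: IH.
by apply: CkM => //; apply: H.
Qed.

Lemma C2_CkT f : C2_on setT f <-> Ck 2 f.
Proof.
split.
  move=> [_ [c [d [pc [pd ppc]]]]]; split; first by move=> x; exact: c.
  move=> i; split; first by move=> x; exact: d.
  split; first by move=> x; exact: pc.
  move=> j; split; first by move=> x; exact: pd.
  by move=> x; exact: ppc.
move=> [c H]; split; first exact: openT.
split; first by move=> x _; exact: c.
split; first by move=> k x _; have [d _] := H k; exact: d.
split; first by move=> k x _; have [_ [pc _]] := H k; exact: pc.
split; first by move=> k j x _; have [_ [_ H2]] := H k; have [d _] := H2 j; exact: d.
by move=> k j x _; have [_ [_ H2]] := H k; have [_ pc] := H2 j; exact: pc.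
Qed.

Set Implicit Arguments. Unset Strict Implicit.
Definition MCk k {p q} (A : 'rV[R]_l -> 'M[R]_(p, q)) :=
  forall i j, Ck k (fun x => A x i j).

Lemma MCk_mul k p q r (A : 'rV[R]_l -> 'M[R]_(p, q)) (B : 'rV[R]_l -> 'M[R]_(q, r)) :
  MCk k A -> MCk k B -> MCk k (fun x => A x *m B x).
Proof.
move=> HA HB i j; under eq_fun => x do rewrite mxE.
by apply: CkSum => t _; apply: CkM.
Qed.

Lemma MCk_add k p q (A B : 'rV[R]_l -> 'M[R]_(p, q)) :
  MCk k A -> MCk k B -> MCk k (fun x => A x + B x).
Proof. by move=> HA HB i j; under eq_fun => x do rewrite mxE; apply: CkD. Qed.

Lemma MCk_scale k p q (c : 'rV[R]_l -> R) (A : 'rV[R]_l -> 'M[R]_(p, q)) :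
  Ck k c -> MCk k A -> MCk k (fun x => c x *: A x).
Proof. by move=> Hc HA i j; under eq_fun => x do rewrite mxE; apply: CkM. Qed.

Lemma MCk_opp k p q (A : 'rV[R]_l -> 'M[R]_(p, q)) :
  MCk k A -> MCk k (fun x => - A x).
Proof.
move=> HA; have -> : (fun x => - A x) = (fun x => (fun _ => -1) x *: A x).
  by apply: funext => x; rewrite scaleN1r.
by apply: MCk_scale => //; apply: CkC.
Qed.

Lemma MCk_const k p q (C : 'M[R]_(p, q)) : MCk k (fun _ => C).
Proof. by move=> i j; apply: CkC. Qed.

Lemma MCk_tr k p q (A : 'rV[R]_l -> 'M[R]_(p, q)) :
  MCk k A -> MCk k (fun x => (A x)^T).
Proof. by move=> HA i j; under eq_fun => x do rewrite mxE. Qed.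

Lemma MCk_scalar k p (c : 'rV[R]_l -> R) : Ck k c -> MCk k (fun x => ((c x)%:M : 'M[R]_p)).
Proof.
move=> Hc i j; under eq_fun => x do rewrite mxE.
by case: (i == j) => /=; [under eq_fun => x do rewrite mulr1n | apply: CkC].
Qed.

Lemma MCk_block k m1 m2 n1 n2 (Aul : 'rV[R]_l -> 'M[R]_(m1, n1))
  (Aur : 'rV[R]_l -> 'M[R]_(m1, n2)) (Adl : 'rV[R]_l -> 'M[R]_(m2, n1))
  (Adr : 'rV[R]_l -> 'M[R]_(m2, n2)) :
  MCk k Aul -> MCk k Aur -> MCk k Adl -> MCk k Adr ->
  MCk k (fun x => block_mx (Aul x) (Aur x) (Adl x) (Adr x)).
Proof.
move=> H1 H2 H3 H4 i j; rewrite -(fintype.splitK i) -(fintype.splitK j).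
case: (fintype.split i) => i'; case: (fintype.split j) => j'.
- have -> : (fun x => block_mx (Aul x) (Aur x) (Adl x) (Adr x) (unsplit (inl i')) (unsplit (inl j'))) = (fun x => Aul x i' j') by apply: funext => x; exact: block_mxEul.
  exact: H1.
- have -> : (fun x => block_mx (Aul x) (Aur x) (Adl x) (Adr x) (unsplit (inl i')) (unsplit (inr j'))) = (fun x => Aur x i' j') by apply: funext => x; exact: block_mxEur.
  exact: H2.
- have -> : (fun x => block_mx (Aul x) (Aur x) (Adl x) (Adr x) (unsplit (inr i')) (unsplit (inl j'))) = (fun x => Adl x i' j') by apply: funext => x; exact: block_mxEdl.
  exact: H3.
- have -> : (fun x => block_mx (Aul x) (Aur x) (Adl x) (Adr x) (unsplit (inr i')) (unsplit (inr j'))) = (fun x => Adr x i' j') by apply: funext => x; exact: block_mxEdr.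
  exact: H4.
Qed.

Lemma MCk_ul k m1 m2 n1 n2 (A : 'rV[R]_l -> 'M[R]_(m1 + m2, n1 + n2)) :
  MCk k A -> MCk k (fun x => ulsubmx (A x)).
Proof. by move=> HA i j; under eq_fun => x do rewrite ulsubmxEsub mxE. Qed.
Lemma MCk_ur k m1 m2 n1 n2 (A : 'rV[R]_l -> 'M[R]_(m1 + m2, n1 + n2)) :
  MCk k A -> MCk k (fun x => ursubmx (A x)).
Proof. by move=> HA i j; under eq_fun => x do rewrite ursubmxEsub mxE. Qed.
Lemma MCk_dr k m1 m2 n1 n2 (A : 'rV[R]_l -> 'M[R]_(m1 + m2, n1 + n2)) :
  MCk k A -> MCk k (fun x => drsubmx (A x)).
Proof. by move=> HA i j; under eq_fun => x do rewrite drsubmxEsub mxE. Qed.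

Lemma Ck_det k p (A : 'rV[R]_l -> 'M[R]_p) : MCk k A -> Ck k (fun x => \det (A x)).
Proof.
move=> HA; rewrite /determinant.
apply: CkSum => s _; apply: CkM; first exact: CkC.
by apply: CkProd => i _; apply: HA.
Qed.

Lemma MCk_adj k p (A : 'rV[R]_l -> 'M[R]_p) : MCk k A -> MCk k (fun x => \adj (A x)).
Proof.
move=> HA i j; under eq_fun => x do rewrite mxE /cofactor.
apply: CkM; first exact: CkC.
by apply: Ck_det => a b; under eq_fun => x do rewrite !mxE.
Qed.

Lemma MCk_inv k p (A : 'rV[R]_l -> 'M[R]_p) : (forall x, A x \in unitmx) ->
  MCk k A -> MCk k (fun x => invmx (A x)).
Proof.
move=> U HA.
have -> : (fun x => invmx (A x)) = (fun x => (\det (A x))^-1 *: \adj (A x)).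
  by apply: funext => x; rewrite /invmx U.
apply: MCk_scale; last exact: MCk_adj.
apply: CkV; last exact: Ck_det.
by move=> x; have := U x; rewrite unitmxE unitfE.
Qed.

Section Chol.
Variable (p : nat).
Implicit Types G : 'M[R]_(1 + p).

Definition cs_a G := (ulsubmx G) 0 0.
Definition cs_S G : 'M[R]_p :=
  drsubmx G - (cs_a G)^-1 *: ((ursubmx G)^T *m ursubmx G).
Definition cs_P G : 'M[R]_(1 + p) :=
  block_mx 1%:M (- ((cs_a G)^-1 *: ursubmx G)) 0 1%:M.

Lemma cs_sym G : sym_mx G -> dlsubmx G = (ursubmx G)^T.
Proof. by move=> sG; rewrite trmx_ursub sG. Qed.

Lemma cs_PGP G : sym_mx G -> cs_a G != 0 ->
  (cs_P G)^T *m G *m cs_P G = block_mx (ulsubmx G) 0 0 (cs_S G).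
Proof.
move=> sG a0; rewrite /cs_P /cs_S.
have EA : ulsubmx G = (cs_a G)%:M by rewrite [LHS]mx11_scalar.
have EG : G = block_mx (ulsubmx G) (ursubmx G) (ursubmx G)^T (drsubmx G).
  by rewrite -(cs_sym sG) submxK.
rewrite [X in _ *m X *m _]EG tr_block_mx !trmx1 trmx0.
rewrite !mulmx_block !mul1mx !mul0mx !mulmx0 !mulmx1 ?addr0 ?add0r.
have E1 : ulsubmx G *m ((cs_a G)^-1 *: ursubmx G) = ursubmx G.
  by rewrite EA mul_scalar_mx scalerA mulfV // scale1r.
have E2 : ((cs_a G)^-1 *: ursubmx G)^T *m ulsubmx G = (ursubmx G)^T.
  by rewrite EA mul_mx_scalar linearZ /= scalerA mulfV // scale1r.
rewrite mulmxN E1 addNr linearN /= mulNmx E2 addNr mul0mx add0r.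
by rewrite linearZ /= mulNmx -scalemxAl addrC.
Qed.

Lemma cs_a_pos G : posdef_mx G -> 0 < cs_a G.
Proof.
move=> pG.
have v0 : col_mx (1%:M : 'M[R]_1) (0 : 'cV[R]_p) != 0.
  by rewrite col_mx_eq0 negb_and; apply/orP; left; apply/eqP => /matrixP/(_ 0 0); rewrite !mxE /= => /eqP; rewrite oner_eq0.
have := pG _ v0; rewrite -[G]submxK tr_col_mx.
rewrite mul_row_block mul_row_col !trmx1 !trmx0 !mul1mx !mul0mx !mulmx1 !mulmx0 ?addr0 ?add0r.
by rewrite submxK.
Qed.

Lemma cs_S_spd G : spd_mx G -> spd_mx (cs_S G).
Proof.
move=> [sG pG]; have a0 : cs_a G != 0 by rewrite gt_eqF // cs_a_pos.
split.
  rewrite /sym_mx /cs_S linearB /= linearZ /= trmx_mul trmxK.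
  by rewrite trmx_drsub sG.
move=> w w0.
pose c := - ((cs_a G)^-1 *: ursubmx G).
have v0 : cs_P G *m col_mx 0 w != 0.
  rewrite /cs_P mul_block_col !mul1mx ?mul0mx ?mulmx0 ?add0r ?addr0.
  by rewrite col_mx_eq0 negb_and w0 orbT.
have := pG _ v0.
have E : (cs_P G *m col_mx 0 w)^T *m G *m (cs_P G *m col_mx 0 w) =
   (col_mx 0 w)^T *m ((cs_P G)^T *m G *m cs_P G) *m col_mx 0 w.
  by rewrite trmx_mul !mulmxA.
rewrite E.
rewrite cs_PGP // tr_col_mx trmx0 mul_row_block mul_row_col.
by rewrite !mul0mx !mulmx0 !add0r.
Qed.

Lemma cs_L G (L' : 'M[R]_p) : spd_mx G -> L'^T *m cs_S G *m L' = 1%:M ->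
  let L := cs_P G *m block_mx (((Num.sqrt (cs_a G))^-1)%:M : 'M[R]_1) 0 0 L' in
  L^T *m G *m L = 1%:M.
Proof.
move=> [sG pG] HL' L; have apos := cs_a_pos pG; have a0 : cs_a G != 0 by rewrite gt_eqF.
set s := (Num.sqrt (cs_a G))^-1.
have E : L^T *m G *m L = (block_mx (s%:M : 'M[R]_1) 0 0 L')^T *m
   ((cs_P G)^T *m G *m cs_P G) *m block_mx (s%:M : 'M[R]_1) 0 0 L'.
  by rewrite /L trmx_mul !mulmxA.
rewrite E cs_PGP // tr_block_mx !trmx0 tr_scalar_mx !mulmx_block.
rewrite !mul0mx !mulmx0 ?addr0 ?add0r HL' [ulsubmx G]mx11_scalar -!scalar_mxM.
have -> : s * ulsubmx G 0 0 * s = 1.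
  rewrite /s -/(cs_a G) -[X in _ * X * _](sqr_sqrtr (ltW apos)) expr2.
  have : Num.sqrt (cs_a G) != 0 by rewrite sqrtr_eq0 -ltNge.
  move=> h; by rewrite mulrA mulVf // mul1r mulfV.
by rewrite !mul0mx -scalar_mx_block.
Qed.

Lemma cs_one : let G := (1%:M : 'M[R]_(1 + p)) in
  [/\ cs_a G = 1, cs_S G = 1%:M & cs_P G = 1%:M].
Proof.
move=> G.
have ul : ulsubmx G = 1%:M by rewrite /G (scalar_mx_block 1 p) block_mxKul.
have ur : ursubmx G = 0 by rewrite /G (scalar_mx_block 1 p) block_mxKur.
have dr : drsubmx G = 1%:M by rewrite /G (scalar_mx_block 1 p) block_mxKdr.
have a1 : cs_a G = 1 by rewrite /cs_a ul mxE.
split => //.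
  by rewrite /cs_S dr ur mulmx0 scaler0 subr0.
by rewrite /cs_P ur scaler0 oppr0 -scalar_mx_block.
Qed.
End Chol.

Lemma core (p : nat) : forall G : 'rV[R]_l -> 'M[R]_p,
  (forall x, spd_mx (G x)) -> MCk 2 G ->
  exists L : 'rV[R]_l -> 'M[R]_p, MCk 2 L /\
    (forall x, (L x)^T *m G x *m L x = 1%:M) /\
    (forall x, G x = 1%:M -> L x = 1%:M).
Proof.
elim: p => [|p IH] G Hs HG.
  exists (fun _ => 1%:M); split; first exact: MCk_const.
  split => x; last by [].
  by apply/matrixP => i; case: i.
pose Gb : 'rV[R]_l -> 'M[R]_(1 + p) := G.
have HGb : MCk 2 Gb by [].
have Ha : Ck 2 (fun x => cs_a (Gb x)) := MCk_ul HGb 0 0.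
have apos : forall x, 0 < cs_a (Gb x) by move=> x; apply: cs_a_pos; case: (Hs x).
have anz : forall x, cs_a (Gb x) != 0 by move=> x; rewrite gt_eqF.
have Hur : MCk 2 (fun x => ursubmx (Gb x)) := MCk_ur HGb.
have HS : MCk 2 (fun x => cs_S (Gb x)).
  have -> : (fun x => cs_S (Gb x)) = (fun x => drsubmx (Gb x) + - ((cs_a (Gb x))^-1 *: ((ursubmx (Gb x))^T *m ursubmx (Gb x)))) by [].
  apply: (MCk_add (MCk_dr HGb)).
  apply: MCk_opp; apply: (MCk_scale (CkV _ _ anz Ha)).
  exact: (MCk_mul (MCk_tr Hur) Hur).
have Hs' : forall x, spd_mx (cs_S (Gb x)) by move=> x; apply: cs_S_spd; exact: Hs.
have [L' [HL'1 [HL'2 HL'3]]] := IH (fun x => cs_S (Gb x)) Hs' HS.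
have Hsq : Ck 2 (fun x => (Num.sqrt (cs_a (Gb x)))^-1).
  apply: (CkV _ _ _ (CkSqrt _ _ apos Ha)).
  by move=> x; rewrite sqrtr_eq0 -ltNge.
have HP : MCk 2 (fun x => cs_P (Gb x)).
  apply: (MCk_block (MCk_const _ _) _ (MCk_const _ _) (MCk_const _ _)).
  exact: (MCk_opp (MCk_scale (CkV _ _ anz Ha) Hur)).
have HD : MCk 2 (fun x => block_mx (((Num.sqrt (cs_a (Gb x)))^-1)%:M : 'M[R]_1) 0 0 (L' x)).
  exact: (MCk_block (MCk_scalar Hsq) (MCk_const _ _) (MCk_const _ _) HL'1).
exists (fun x => cs_P (Gb x) *m block_mx (((Num.sqrt (cs_a (Gb x)))^-1)%:M : 'M[R]_1) 0 0 (L' x)).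
split; first exact: (MCk_mul HP HD).
split; first by move=> x; exact: (cs_L (Hs x) (HL'2 x)).
move=> x Gx; have [a1 S1 P1] := cs_one p.
have Gbx : Gb x = 1%:M by exact: Gx.
rewrite (HL'3 x); last by rewrite Gbx.
by rewrite Gbx a1 P1 sqrtr1 invr1 mul1mx -scalar_mx_block.
Qed.

Lemma posdef_unit p (A : 'M[R]_p) : posdef_mx A -> A \in unitmx.
Proof.
move=> pA; rewrite -row_free_unit -kermx_eq0.
apply/eqP/row_matrixP => i; rewrite row0; apply/eqP; apply/negPn/negP => ri.
have := pA (row i (kermx A))^T; rewrite trmx_eq0 => /(_ ri).
by rewrite trmxK -row_mul mulmx_ker row0 mul0mx mxE ltxx.
Qed.

End A.
Unset Implicit Arguments. Set Strict Implicit.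

Theorem lemma1 (R : realType) (n m l : nat)
  (K M : 'rV[R]_l -> 'M[R]_n)
  (HK : forall x, spd_mx (K x)) (HM : forall x, spd_mx (M x))
  (HK2 : mxC2_on setT K) (HM2 : mxC2_on setT M)
  (b : 'cV[R]_n) (x0 : 'rV[R]_l) (Um0 : 'M[R]_(n, m))
  (HU : lanczos_basis (K x0) (M x0) b Um0) :
  let F0x0 := Um0^T *m M x0 *m invmx (K x0) *m M x0 *m Um0 in
  exists (N : set 'rV[R]_l) (U0 : 'rV[R]_l -> 'M[R]_(n, m)),
    open N /\ N x0 /\
    (forall x, N x -> M_orthonormal (M x) (U0 x) /\ ((U0 x)^T == Um0^T)%MS) /\
    mxC2_on N (fun x => (U0 x)^T *m M x *m invmx (K x) *m M x *m U0 x) /\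
    (U0 x0)^T *m M x0 *m invmx (K x0) *m M x0 *m U0 x0 = F0x0.
Proof.
move=> F0x0; have [HO _] := HU; rewrite /M_orthonormal in HO.
have MK : MCk 2 K by move=> i j; apply/C2_CkT; exact: HK2.
have MM : MCk 2 M by move=> i j; apply/C2_CkT; exact: HM2.
pose G x := Um0^T *m M x *m Um0.
have HG : MCk 2 G by apply: MCk_mul; [apply: MCk_mul => //|]; exact: MCk_const.
have HsG : forall x, spd_mx (G x).
  move=> x; have [sM pM] := HM x; split.
    by rewrite /sym_mx /G !trmx_mul trmxK sM mulmxA.
  move=> v v0.
  have u0 : Um0 *m v != 0.
    apply/negP => /eqP u0; move/negP: v0; apply.
    by rewrite -[v]mul1mx -HO -!mulmxA u0 !mulmx0.
  have := pM _ u0; rewrite /G trmx_mul !mulmxA //.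
have [L [HL1 [HL2 HL3]]] := core HsG HG.
exists setT, (fun x => Um0 *m L x).
split; first exact: openT.
split; first by [].
split.
  move=> x _; split.
    by rewrite /M_orthonormal trmx_mul -(HL2 x) /G !mulmxA.
  have [U1 _] := mulmx1_unit (HL2 x).
  have UL : L x \in unitmx by have [_ ?] := mulmx1_unit (HL2 x).
  rewrite trmx_mul; apply/eqmxP; apply: eqmxMfull.
  by rewrite row_full_unit unitmx_tr.
split.
  move=> a c; apply/C2_CkT; move: a c.
  have HU0 : MCk 2 (fun x => Um0 *m L x) by apply: MCk_mul => //; exact: MCk_const.
  have HKi : MCk 2 (fun x => invmx (K x)).
    by apply: MCk_inv => // x; apply: posdef_unit; case: (HK x).
  apply: MCk_mul => //; apply: MCk_mul => //; apply: MCk_mul => //.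
  by apply: MCk_mul => //; apply: MCk_tr.
by rewrite HL3 ?mulmx1.
Qed.
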